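(* Let $\ell,k$ be positive integers. Consider RSA-PFDH$^\oplus$ with message space $\{0,1\}^\ell$ and hash function $h:\{0,1\}^{\ell+k}\to\{0,1\}^k$, in the chosen prefix second preimage tractable random oracle model $\mathrm{CP\text{-}SPT\text{-}ROM}_{(\ell,k,k)}$. There exists a PPT adversary $\mathcal{A}$ that, by making queries to the signing oracle and to $\mathcal{CP\text{-}SPO}^h$, breaks RSA-PFDH$^\oplus$ (outputs a valid EUF-CMA forgery) with probability at least $1-e^{(1-2^{\ell})/2^k}$.
   Context: Model $\mathrm{CP\text{-}SPT\text{-}ROM}_{(\ell,k,k)}$: let $M=\{0,1\}^{\ell}$, $R=\{0,1\}^{k}$, $X=M\times R$ (elements written as strings $m\|r$), $Y=\{0,1\}^k$, and $h:X\to Y$ a uniformly random function with table $\mathbb{T}_h$. All parties may query $\mathcal{RO}^h(x)$, returning $h(x)$, and $\mathcal{CP\text{-}SPO}^h(x,r')$: given $|x|=\ell+k$ and $|r'|=k$, let $y=h(x)$; if there is an entry $(m'\|r',y)\in\mathbb{T}_h$ with $m'\|r'\ne x$, it returns such an $m'\|r'$ uniformly at random; otherwise $\perp$. RSA-PFDH$^\oplus$: $\mathsf{RSAGen}(1^k)$ gives $(N,e,d)$ with $N=pq$ for distinct random $k/2$-bit primes, random $e\in\mathbb{Z}_{\phi}$, $ed\equiv1\pmod{\phi}$, $\phi=(p-1)(q-1)$; $vk=(N,e)$, $sk=(N,d)$. $\mathsf{Sign}(sk,m)$: pick $r\in\{0,1\}^k$ uniformly, $y=h(m\|r)\oplus r$,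 output $\sigma=(r,y^d\bmod N)$. $\mathsf{Verify}(vk,m,(r,x))=1$ iff $h(m\|r)\oplus r=x^e\bmod N$. EUF-CMA game: the adversary receives $vk$, may query the signing oracle and the model's oracles, and outputs $(m^*,\sigma^* )$; it breaks the scheme if $\mathsf{Verify}(vk,m^*,\sigma^* )=1$ and $m^*$ was never queried to the signing oracle. *)

(* Defs.v *)
From HB Require Import structures.
From mathcomp Require Import all_boot all_order all_algebra.
From mathcomp Require Import reals sequences exp.
Set Implicit Arguments. Unset Strict Implicit. Unset Printing Implicit Defensive.
Import Order.TTheory GRing.Theory Num.Theory.

Definition bits (n : nat) := (n.-tuple bool)%type.

Definition nat_of_bits (s : seq bool) : nat :=
  foldl (fun acc (b : bool) => acc.*2 + b) 0 s.

(* big-endian n-bit encoding of x (x taken modulo 2^n) *)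
Definition bits_of_nat (n x : nat) : seq bool :=
  rev [seq odd (x %/ 2 ^ i) | i <- iota 0 n].

Definition xors (s t : seq bool) : seq bool := [seq p.1 (+) p.2 | p <- zip s t].

Definition tup (n : nat) (s : seq bool) : option (bits n) := insub s.

Definition rsa_phi (p q : nat) : nat := (p.-1 * q.-1)%N.

Definition rsa_keys (k : nat) : {set 'I_(2 ^ k) * 'I_(2 ^ k) * 'I_(2 ^ k)} :=
  [set t : 'I_(2 ^ k) * 'I_(2 ^ k) * 'I_(2 ^ k) | let: (p, q, e) := t in
     [&& prime p, prime q, (p != q :> nat),
         (2 ^ (k./2).-1 <= p < 2 ^ k./2)%N,
         (2 ^ (k./2).-1 <= q < 2 ^ k./2)%N,
         (e < rsa_phi p q)%N & coprime e (rsa_phi p q)]].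

(* d with e * d = 1 (mod phi), via the extended gcd *)
Definition rsa_d (p q e : nat) : nat := ((egcdn e (rsa_phi p q)).1 %% rsa_phi p q)%N.

Definition hashfun (l k : nat) := {ffun bits l * bits k -> bits k}.

Definition rsa_verify (l k : nat) (h : hashfun l k) (N e : nat)
    (m : bits l) (r : bits k) (x : nat) : bool :=
  (nat_of_bits (xors (h (m, r)) r) == x ^ e %[mod N])%N.

(* No operation can increase string lengths beyond those of inputs/constants,
   so a program runs in time polynomial in its size and in l, k. *)
Inductive expr : Type :=
| EVar of nat
| EConst of seq bool
| EXor of expr & expr
| ETake of nat & expr
| EDrop of nat & expr.

Inductive prog : Type :=
| POut of expr & expr & expr            (* output forgery (m_out, (r_out, x_out)) *)
| PSign of expr & prog                  (* Sign(m); appends registers r, x *)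
| PRO of expr & expr & prog             (* RO(m||r); appends h(m||r) *)
| PSPO of expr & expr & expr & prog & prog
    (* CP-SPO(m||r, r'): if bottom continue with the 1st program,
       else append registers m', r' and continue with the 2nd *)
| PIf of expr & expr & prog & prog.

Fixpoint esize (a : expr) : nat :=
  match a with
  | EVar i => i.+1
  | EConst s => (size s).+1
  | EXor a b => (esize a + esize b).+1
  | ETake n a => (n + esize a).+1
  | EDrop n a => (n + esize a).+1
  end.

Fixpoint psize (p : prog) : nat :=
  match p with
  | POut a b c => (esize a + esize b + esize c).+1
  | PSign a p => (esize a + psize p).+1
  | PRO a b p => (esize a + esize b + psize p).+1
  | PSPO a b c p1 p2 => (esize a + esize b + esize c + psize p1 + psize p2).+1
  | PIf a b p1 p2 => (esize a + esize b + psize p1 + psize p2).+1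
  end.

Fixpoint eval (env : seq (seq bool)) (a : expr) : seq bool :=
  match a with
  | EVar i => nth [::] env i
  | EConst s => s
  | EXor a b => xors (eval env a) (eval env b)
  | ETake n a => take n (eval env a)
  | EDrop n a => drop n (eval env a)
  end.

Local Open Scope ring_scope.

Section Run.
Variables (R : numFieldType) (l k : nat) (h : hashfun l k) (N e d : nat).

(* Q = messages queried to the signing oracle; env = registers *)
Fixpoint run (Q : seq (bits l)) (env : seq (seq bool)) (p : prog) : R :=
  match p with
  | POut am ar ax =>
      match tup l (eval env am), tup k (eval env ar) with
      | Some m, Some r =>
          if (m \notin Q) && rsa_verify h N e m r (nat_of_bits (eval env ax))
          then 1 else 0
      | _, _ => 0
      end
  | PSign am p' =>
      match tup l (eval env am) with
      | Some m =>
          (\sum_(r : bits k)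
             run (m :: Q)
               (env ++ [:: val r;
                  bits_of_nat k ((nat_of_bits (xors (h (m, r)) r)) ^ d %% N)%N]) p')
          / #|{: bits k}|%:R
      | None => run Q (env ++ [:: [::]; [::]]) p'
      end
  | PRO am ar p' =>
      let ans := match tup l (eval env am), tup k (eval env ar) with
                 | Some m, Some r => val (h (m, r))
                 | _, _ => [::]
                 end in
      run Q (rcons env ans) p'
  | PSPO am ar ar' pn ps =>
      match tup l (eval env am), tup k (eval env ar), tup k (eval env ar') with
      | Some m, Some r, Some r' =>
          let S := [set x' : bits l * bits k |
                     [&& x'.2 == r', x' != (m, r) & h x' == h (m, r)]] in
          if S == set0 then run Q env pn
          else (\sum_(x' in S) run Q (env ++ [:: val x'.1; val x'.2]) ps)
               / #|S|%:R
      | _, _, _ => run Q env pn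
      end
  | PIf a b p1 p2 => if eval env a == eval env b then run Q env p1 else run Q env p2
  end.
End Run.

Definition adv_success (R : numFieldType) (l k : nat) (A : prog) : R :=
  (\sum_(t in rsa_keys k)
     let: (p, q, e) := t in
     let N := (p * q)%N in
     (\sum_(h : hashfun l k)
        run R h N e (rsa_d p q e) [::] [:: bits_of_nat k N; bits_of_nat k e] A)
     / #|{: hashfun l k}|%:R)
  / #|rsa_keys k|%:R.

(* Main.v *)
Require Import Defs.
From mathcomp Require Import all_boot all_order all_algebra.
From mathcomp Require Import reals sequences exp.
From mathcomp Require Import zify.
Import Order.TTheory GRing.Theory Num.Theory.

Lemma nat_of_bits_rcons s b : nat_of_bits (rcons s b) = ((nat_of_bits s).*2 + b)%N.
Proof. by rewrite /nat_of_bits foldl_rcons. Qed.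

Lemma bits_of_natS n x :
  bits_of_nat n.+1 x = rcons (bits_of_nat n (x %/ 2)) (odd x).
Proof.
rewrite /bits_of_nat /= rev_cons divn1; congr rcons.
rewrite (iotaDl 1 0) -map_comp; congr rev; apply: eq_map => i /=.
by rewrite expnS divnMA.
Qed.

Lemma bits_roundtrip n x : (x < 2 ^ n)%N -> nat_of_bits (bits_of_nat n x) = x.
Proof.
elim: n x => [|n IH] x hx.
  by case: x hx.
rewrite bits_of_natS nat_of_bits_rcons IH.
  by rewrite divn2 addnC odd_double_half.
have h2 : (2^n.+1 = (2^n).*2)%N by rewrite expnS mul2n.
by rewrite divn2 -ltn_double -h2; apply: leq_ltn_trans hx; rewrite -{2}(odd_double_half x) leq_addl.
Qed.

Lemma fermat_iter p y t : prime p -> y ^ (1 + t * p.-1) = y %[mod p].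
Proof.
move=> pp; elim: t => [|t IH]; first by rewrite mul0n addn0 expn1.
rewrite mulSn addnCA expnD -modnMmr IH modnMmr -expnSr prednK ?prime_gt0 //.
exact: fermat_little.
Qed.

Lemma rsa_correct p q e y :
  prime p -> prime q -> p != q -> (e < rsa_phi p q)%N -> coprime e (rsa_phi p q) ->
  ((y ^ rsa_d p q e %% (p * q)) ^ e = y %[mod p * q])%N.
Proof.
move=> pp pq npq _ co.
have p2 := prime_gt1 pp; have q2 := prime_gt1 pq.
have phi2 : (1 < rsa_phi p q)%N.
  rewrite /rsa_phi; move/eqP: npq => npq.
  have [hp|hp] : (p = 2 \/ 3 <= p)%N by lia.
    have hq : (3 <= q)%N by lia.
    rewrite hp; nia.
  nia.
have e0 : (0 < e)%N.
  case: e co => // ; rewrite /coprime gcd0n => /eqP h; lia.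
have ed : ((e * rsa_d p q e) %% rsa_phi p q = 1)%N.
  rewrite /rsa_d; case: (egcdnP (rsa_phi p q) e0) => km kn H _ /=.
  rewrite modnMmr mulnC H (eqP co) -modnDml modnMl add0n modn_small //.
have edq : (e * rsa_d p q e = 1 + (e * rsa_d p q e %/ rsa_phi p q * q.-1) * p.-1)%N.
  by rewrite {1}(divn_eq (e * rsa_d p q e) (rsa_phi p q)) ed addnC -mulnA [(q.-1 * _)%N]mulnC.
apply/eqP; rewrite modnXm -expnM mulnC.
have copq : coprime p q by rewrite prime_coprime // dvdn_prime2.
rewrite chinese_remainder //; apply/andP; split; apply/eqP.
  by rewrite edq fermat_iter.
rewrite {1}(divn_eq (e * rsa_d p q e) (rsa_phi p q)) ed addnC /rsa_phi mulnA.
exact: fermat_iter.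
Qed.

Set Implicit Arguments. Unset Strict Implicit.
Local Open Scope ring_scope.

Definition Aprog (l : nat) : prog :=
  PSign (EConst (nseq l false))
    (PSPO (EConst (nseq l false)) (EVar 2) (EVar 2)
       (POut (EConst [::]) (EVar 2) (EVar 3))
       (POut (EVar 4) (EVar 2) (EVar 3))).

Lemma tupK n (t : bits n) : tup n (val t) = Some t.
Proof. by rewrite /tup valK. Qed.

Definition Sset l k (h : hashfun l k) (r : bits k) :=
  [set x' : bits l * bits k |
     [&& x'.2 == r, x' != (nseq_tuple l false, r) & h x' == h (nseq_tuple l false, r)]].

Lemma run_A (R : numFieldType) l k (h : hashfun l k) N e d env0 :
  (0 < l)%N -> (0 < N)%N -> (N <= 2 ^ k)%N -> size env0 = 2%N ->
  (forall y, ((y ^ d %% N) ^ e = y %[mod N])%N) ->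
  run R h N e d [::] env0 (Aprog l) =
  (\sum_(r : bits k) ((Sset h r) != set0)%:R) / #|{: bits k}|%:R.
Proof.
move=> l0 N0 Nk senv rsa.
rewrite /Aprog /=.
have -> : tup l (nseq l false) = Some (nseq_tuple l false).
  by rewrite -[nseq l false]/(val (nseq_tuple l false)) tupK.
congr (_ / _); apply: eq_bigr => r _.
case: env0 senv => [|a [|b [|]]] // _ /=.
rewrite !tupK.
case: ifP => HS.
  rewrite /tup; case: insubP => //= u /eqP H _; by rewrite -H in l0.
rewrite (eq_bigr (fun _ => 1)); last first.
  move=> [m' r'] /=; rewrite inE /= => /andP [/eqP -> /andP [neq /eqP hh]].
  rewrite tupK inE /=.
  have -> : m' != nseq_tuple l false by apply: contra neq => /eqP ->.
  rewrite /rsa_verify /= hh bits_roundtrip; first by rewrite eq_sym rsa eqxx.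
  by apply: leq_trans Nk; rewrite ltn_mod.
rewrite sumr_const divff //.
rewrite pnatr_eq0 -lt0n card_gt0. by rewrite HS.
Qed.

Lemma prod_bool (R : numDomainType) (I : finType) (P : {pred I}) (B : I -> bool) :
  \prod_(i in P) ((B i)%:R : R) = ([forall i in P, B i])%:R.
Proof.
case: forall_inP => [H|H].
  by rewrite big1 // => i /H ->.
have [i /andP [Pi nBi]] : exists2 i, (i \in P) && ~~ B i & true.
  case: (pickP (fun i => (i \in P) && ~~ B i)) => [i Hi|H0]; first by exists i.
  by exfalso; apply: H => i Pi; move: (H0 i); rewrite Pi /= => /negbFE.
by rewrite (bigD1 i) //= (negbTE nBi) mul0r.
Qed.

Section Count.
Variables (l k : nat) (r : bits k).
Definition x0 : bits l * bits k := (nseq_tuple l false, r).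
Definition Tset := [set x : bits l * bits k | (x.2 == r) && (x != x0)].

Lemma Sset0 (h : hashfun l k) : (Sset h r == set0) = [forall x in Tset, h x != h x0].
Proof.
apply/idP/idP.
  move/eqP=> H; apply/forall_inP => x; rewrite inE => /andP [x2 nx]; apply/negP => hx.
  have : x \in Sset h r by rewrite inE x2 /= nx hx.
  by rewrite H inE.
move/forall_inP => H; apply/eqP/setP => x; rewrite !inE.
apply/negbTE/negP => /and3P [x2 nx hx].
have : x \in Tset by rewrite inE x2 nx.
by move/H; rewrite hx.
Qed.

Lemma card_Tset : (2 ^ l - 1 <= #|Tset|)%N.
Proof.
have -> : (2 ^ l - 1 = #|[set~ nseq_tuple l false]|)%N.
  by rewrite cardsC1 card_tuple card_bool subn1.
rewrite -(card_imset _ (f := fun m => (m, r))); last by move=> a b [].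
apply: subset_leq_card; apply/subsetP => x /imsetP [m]; rewrite in_setC1 => nm ->.
by rewrite inE eqxx /= /x0; apply: contra nm => /eqP [->].
Qed.
End Count.

Lemma prod_boolT (R : numDomainType) (I : finType) (B : I -> bool) :
  \prod_i ((B i)%:R : R) = ([forall i, B i])%:R.
Proof.
case: forallP => [H|H].
  by rewrite big1 // => i _; rewrite H.
have [i nBi] : exists2 i, ~~ B i & true.
  case: (pickP (fun i => ~~ B i)) => [i Hi|H0]; first by exists i.
  by exfalso; apply: H => i; move: (H0 i) => /negbFE.
by rewrite (bigD1 i) //= (negbTE nBi) mul0r.
Qed.

Section Count2.
Variables (R : numFieldType) (l k : nat) (r : bits k).
Local Notation x0 := (x0 l r).
Local Notation T := (Tset l r).

Definition G (y0 : bits k) (x : bits l * bits k) (y : bits k) : bool :=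
  ((x == x0) ==> (y == y0)) && ((x \in T) ==> (y != y0)).

Lemma x0T : x0 \notin T.
Proof. by rewrite inE eqxx andbF. Qed.

Lemma bad_decomp (h : hashfun l k) :
  ((Sset h r == set0)%:R : R) = \sum_y0 \prod_x ((G y0 x (h x))%:R : R).
Proof.
under eq_bigr do rewrite prod_boolT.
rewrite (bigD1 (h x0)) //= big1 ?addr0; last first.
  move=> y0 ny; apply/eqP; rewrite pnatr_eq0 eqb0; apply/forallP => /(_ x0).
  by rewrite /G eqxx /= eq_sym (negbTE ny).
rewrite Sset0; congr (_%:R); congr (nat_of_bool _).
apply/idP/idP => [/forall_inP H|/forallP H]; [apply/forallP => x|apply/forall_inP => x].
  rewrite /G; case: (eqVneq x x0) => [->|nx] /=; first by rewrite eqxx (negbTE x0T).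
  by apply/implyP => /H.
by move=> xT; move: (H x); rewrite /G xT /= => /andP [].
Qed.

Lemma sumG y0 x :
  \sum_y ((G y0 x y)%:R : R) =
  if x == x0 then 1 else if x \in T then #|{: bits k}|%:R - 1 else #|{: bits k}|%:R.
Proof.
rewrite /G; case: (eqVneq x x0) => [->|nx] /=.
  rewrite (negbTE x0T) /= (bigD1 y0) //= eqxx big1 ?addr0 // => y /negbTE -> //.
case: (boolP (x \in T)) => xT /=.
  have -> : \sum_y ((y != y0)%:R : R) = \sum_y (1 - (y == y0)%:R).
    by apply: eq_bigr => y _; case: (y == y0); rewrite /= ?subrr ?subr0.
  rewrite sumrB sumr_const (bigD1 y0) //= eqxx big1 ?addr0 // => y /negbTE -> //.
by rewrite sumr_const.
Qed.


Lemma bad_sum : \sum_(h : hashfun l k) ((Sset h r == set0)%:R : R) =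
  #|{: hashfun l k}|%:R * (1 - (#|{: bits k}|%:R)^-1) ^+ #|T|.
Proof.
set K : R := #|{: bits k}|%:R.
have K0 : K != 0 by rewrite /K card_tuple card_bool pnatr_eq0 expn_eq0.
under eq_bigr do rewrite bad_decomp.
rewrite exchange_big /=.
have E : forall y0, \sum_(h : hashfun l k) \prod_x ((G y0 x (h x))%:R : R) =
    K ^+ #|{: bits l * bits k}| * \prod_x ((\sum_y ((G y0 x y)%:R : R)) / K).
  move=> y0.
  under [in RHS]eq_bigr do rewrite mulr_suml.
  rewrite bigA_distr_bigA mulr_sumr; apply: eq_bigr => h _.
  rewrite big_split /= prodr_const mulrCA -exprMn mulfV // expr1n mulr1.
  done.
under eq_bigr do rewrite E.
have P : \prod_x ((if x == x0 then 1 else if x \in T then K - 1 else K) / K) =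
    (1 - K^-1) ^+ #|T| / K.
  rewrite (bigID (fun x => x \in T)) /=.
  rewrite (eq_bigr (fun _ => 1 - K^-1)); last first.
    move=> x xT; have -> : (x == x0) = false.
      by apply/negbTE; apply: contraNneq x0T => <-.
    by rewrite xT mulrBl mul1r divff.
  rewrite prodr_const (bigD1 x0) ?x0T //= eqxx big1 ?mulr1 ?div1r //.
  by move=> x /andP [xT /negbTE ->]; rewrite (negbTE xT) divff.
under eq_bigr do under eq_bigr do rewrite sumG.
under eq_bigr do rewrite P.
rewrite sumr_const card_ffun natrX -/K -mulr_natr.
rewrite -mulrA mulrAC -mulrA.
have -> : (#|@predT (bits k)|%:R / K) = 1 by apply: divff.
by rewrite mulr1.
Qed.

End Count2.

Lemma exp_bound (R : realType) l k (r : bits k) : (0 < l)%N ->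
  1 - expR ((1 - 2 ^+ l) / 2 ^+ k) <=
  1 - (1 - (#|{: bits k}|%:R : R)^-1) ^+ #|Tset l r|.
Proof.
move=> l0.
rewrite lerD2l lerN2 card_tuple card_bool natrX.
set K : R := 2 ^+ k.
have K1 : 1 <= K by rewrite /K exprn_ege1 // ler1n.
have K0 : 0 < K by apply: lt_le_trans K1.
have c0 : 0 <= 1 - K^-1 by rewrite subr_ge0 invr_le1 // unitf_gt0.
have c1 : 1 - K^-1 <= 1 by rewrite lerBlDr lerDl invr_ge0 ltW.
apply: le_trans (ler_wiXn2l c0 c1 (card_Tset l r)) _.
have -> : (1 - 2 ^+ l) / K = (2 ^ l - 1)%N%:R * (- K^-1).
  rewrite natrB ?expn_gt0 // natrX mulrN -mulNr opprB.
  done.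
rewrite expRM_natl; apply: lerXn2r; rewrite ?nnegrE //.
  by apply: ltW; apply: expR_gt0.
exact: expR_ge1Dx.
Qed.

Lemma good_sum (R : numFieldType) l k (r : bits k) :
  \sum_(h : hashfun l k) ((Sset h r != set0)%:R : R) =
  #|{: hashfun l k}|%:R * (1 - (1 - (#|{: bits k}|%:R)^-1) ^+ #|Tset l r|).
Proof.
have -> : \sum_(h : hashfun l k) ((Sset h r != set0)%:R : R) =
          \sum_(h : hashfun l k) (1 - (Sset h r == set0)%:R).
  by apply: eq_bigr => h _; case: (_ == _); rewrite /= ?subrr ?subr0.
by rewrite sumrB bad_sum sumr_const -mulr_natl mulr1 mulrBr mulr1.
Qed.

Lemma per_key (R : realType) l k (p q e : nat) : (0 < l)%N ->
  prime p -> prime q -> p != q -> (p < 2 ^ k./2)%N -> (q < 2 ^ k./2)%N ->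
  (e < rsa_phi p q)%N -> coprime e (rsa_phi p q) ->
  1 - expR ((1 - 2 ^+ l) / 2 ^+ k) <=
  (\sum_(h : hashfun l k)
        run R h (p * q) e (rsa_d p q e) [::] [:: bits_of_nat k (p * q); bits_of_nat k e] (Aprog l))
     / #|{: hashfun l k}|%:R.
Proof.
move=> l0 pp pq npq hp hq he co.
have N0 : (0 < p * q)%N by rewrite muln_gt0 !prime_gt0.
have Nk : (p * q <= 2 ^ k)%N.
  apply: leq_trans (ltnW (ltn_mul hp hq)) _.
  by rewrite -expnD addnn leq_pexp2l // -{2}(odd_double_half k) leq_addl.
rewrite (eq_bigr (fun h : hashfun l k => (\sum_(r : bits k) ((Sset h r) != set0)%:R) / (#|{: bits k}|%:R : R))); last first.
  by move=> h _; apply: run_A => // y; exact: rsa_correct.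
have H0 : (0 : R) < #|{: hashfun l k}|%:R by rewrite ltr0n card_ffun card_tuple card_bool !expn_gt0.
have K0 : (0 : R) < #|{: bits k}|%:R by rewrite ltr0n card_tuple card_bool !expn_gt0.
rewrite -mulr_suml exchange_big /= ler_pdivlMr // ler_pdivlMr //.
set B := 1 - expR _.
have -> : B * #|{: hashfun l k}|%:R * #|{: bits k}|%:R = \sum_(r : bits k) (#|{: hashfun l k}|%:R * B).
  by rewrite sumr_const -[RHS]mulr_natr [_ * B]mulrC.
apply: ler_sum => r _; rewrite good_sum ler_wpM2l ?ler0n //.
exact: exp_bound.
Qed.


Unset Implicit Arguments.

Lemma psize_A l k : (psize (Aprog l) <= 40 * (l + k).+1 ^ 40)%N.
Proof.
rewrite /= size_nseq.
rewrite expnS.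
have := expn_gt0 (l + k).+1 39.
move: ((l + k).+1 ^ 39)%N => z hz.
have : ((l + k).+1 <= (l + k).+1 * z)%N by rewrite leq_pmulr.
move: ((l + k).+1 * z)%N => w; lia.
Qed.

Theorem theorem5 (R : realType) :
  exists A : nat -> nat -> prog,
    (exists c : nat, forall l k : nat, (psize (A l k) <= c * (l + k).+1 ^ c)%N) /\
    (forall l k : nat, (0 < l)%N -> (0 < k)%N -> (0 < #|rsa_keys k|)%N ->
       1 - expR ((1 - 2 ^+ l) / 2 ^+ k) <= adv_success R l k (A l k)).
Proof.
exists (fun l _ => Aprog l); split.
  by exists 40%N => l k; apply: psize_A.
move=> l k l0 k0 kn; rewrite /adv_success.
have Kp : (0 : R) < #|rsa_keys k|%:R by rewrite ltr0n.
rewrite ler_pdivlMr //.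
set B := 1 - expR _.
have -> : B * #|rsa_keys k|%:R = \sum_(t in rsa_keys k) B by rewrite sumr_const -[RHS]mulr_natr.
apply: ler_sum => [[[p q] e]]; rewrite inE.
move=> /and5P [pp pq npq /andP [_ hp] /and3P [/andP [_ hq] he co]].
exact: per_key.
Qed.
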